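(* Let $L=1$ and $\vec m=(a,b)\in\mathcal R^2$ be arbitrary. For every topological space $X$, all $k\in\mathbb N$, $n\ge0$ and every cycle $u\in\mathcal K_n(X)$ (i.e. $\partial_n(u)=0$), the following equalities hold in ${}_{\vec m}\mathcal H_n(X)$: $$[a^k\,\mathcal{SD}_n^{(k)}(u)]=[b^k u],\qquad [b^k\,\mathcal{SD}_n^{(k)}(u)]=[a^k u],$$ where $\mathcal{SD}_n^{(k)}$ denotes the $k$-fold composite of $\mathcal{SD}_n$.
   Context: $\mathcal R$ is a commutative ring with unit. $\mathcal S_n(X)$ = continuous maps $[0,1]^n\to X$ ($[0,1]^0=\{0\}$), $\mathcal K_n(X)$ the free $\mathcal R$-module on $\mathcal S_n(X)$, $\mathcal K_{-1}(X)=0$. Boundary: for $n\ge1$, $\partial_n(T)=\sum_{j=1}^n(-1)^{j+1}(a\langle T\rangle_{n,0,j}+b\langle T\rangle_{n,1,j})$ where $\langle T\rangle_{n,i,j}(x_1,\dots,x_{n-1})=T(x_1,\dots,x_{j-1},i,x_j,\dots,x_{n-1})$ ($\langle T\rangle_{1,i,1}(0)=T(i)$), extended linearly, $\partial_0=0$; ${}_{\vec m}\mathcal H_n(X)=\ker\partial_n/\operatorname{im}\partial_{n+1}$ and $[u]$ is the class of a cycle $u$. Subdivision maps ($\mathcal R$-linear): $\mathcal{SD}_0(T)=-T$ and for $n\ge1$, $\mathcal{SD}_n(T)=\sum_{\vec e\in\{0,2\}^n}\sum_{\vec v\in\mathcal V_{\vec e,n}}(-\prod_iv_i)\,T\circ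 h_{\vec e,\vec v}$, where $\mathcal V_{\vec e,n}$ is the set of $\vec v\in\{-1,1\}^n$ with $v_i=1$ whenever $e_i=0$, and $h_{\vec e,\vec v}(x)_i=\frac13(e_i+v_ix_i)$. *)

(* Defs.v *)
From Stdlib Require List.
From HB Require Import structures.
From mathcomp Require Import all_boot all_order all_algebra.
From mathcomp Require Import all_classical all_reals all_analysis.
Set Implicit Arguments. Unset Strict Implicit. Unset Printing Implicit Defensive.
Import Order.TTheory GRing.Theory Num.Theory.
Import numFieldNormedType.Exports.
Local Open Scope classical_set_scope.
Local Open Scope ring_scope.

(* Points of R^n are row vectors 'rV[R]_n ; the unit cube [0,1]^n is Icube n
   (for n = 0, 'rV_0 has a single point, matching [0,1]^0 = {0}).
   A singular n-cube is a map T : 'rV[R]_n -> X continuous on [0,1]^n;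
   two such maps are the same cube iff they agree on [0,1]^n.
   An element of K_n(X) (free Rg-module on the n-cubes) is represented by a
   formal list of (coefficient, cube); the element it denotes is determined
   by its coefficient function [coef]. *)

Section Cubical.
Variables (Rg : comPzRingType) (R : realType) (X : topologicalType).

Definition Icube (n : nat) : set 'rV[R]_n :=
  [set x | forall i : 'I_n, 0 <= x ord0 i <= 1].

Definition chain (n : nat) := seq (Rg * ('rV[R]_n -> X)).

Definition valid (n : nat) (l : chain n) : Prop :=
  forall p, List.In p l -> {within (@Icube n), continuous p.2}.

Definition same_cube (n : nat) (T S : 'rV[R]_n -> X) : Prop :=
  forall x, @Icube n x -> T x = S x.

Definition coef (n : nat) (l : chain n) (S : 'rV[R]_n -> X) : Rg :=
  \sum_(p <- l) (if `[< same_cube p.2 S >] then p.1 else 0).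

(* ins j t x = (x_1,..,x_{j-1}, t, x_j, .., x_{n}) (0-based j) *)
Definition ins (n : nat) (j : 'I_n.+1) (t : R) (x : 'rV[R]_n) : 'rV[R]_n.+1 :=
  \row_k match unlift j k with None => t | Some k' => x ord0 k' end.

(* face <T>_{n+1,i,j+1} *)
Definition face (n : nat) (T : 'rV[R]_n.+1 -> X) (i : R) (j : 'I_n.+1) :
  'rV[R]_n -> X := fun x => T (ins j i x).

Definition bd (a b : Rg) (n : nat) (l : chain n.+1) : chain n :=
  flatten [seq flatten [seq [:: ((-1) ^+ (val j) * a * p.1, face p.2 0 j);
                                ((-1) ^+ (val j) * b * p.1, face p.2 1 j)]
                         | j : 'I_n.+1 <- enum 'I_n.+1] | p <- l].

(* u is a cycle (d_0 = 0) *)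
Definition is_cycle (a b : Rg) (n : nat) : chain n -> Prop :=
  match n as m return chain m -> Prop with
  | 0 => fun _ => True
  | m.+1 => fun u => forall S, coef (bd a b u) S = 0
  end.

Definition homologous (a b : Rg) (n : nat) (x y : chain n) : Prop :=
  exists w : chain n.+1, valid w /\
    forall S, coef (bd a b w) S = coef x S - coef y S.

Definition scale (n : nat) (r : Rg) (l : chain n) : chain n :=
  [seq (r * p.1, p.2) | p <- l].

(* Subdivision. A pair (e_i, v_i) with v_i = 1 whenever e_i = 0 is encoded
   by k : 'I_3 : 0 -> (0,1), 1 -> (2,1), 2 -> (2,-1). *)
Definition e_of (k : 'I_3) : R := if val k == 0%N then 0 else 2.
Definition v_of (k : 'I_3) : R := if val k == 2%N then -1 else 1.
Definition vR_of (k : 'I_3) : Rg := if val k == 2%N then -1 else 1.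

Definition h_map (n : nat) (f : {ffun 'I_n -> 'I_3}) (x : 'rV[R]_n) : 'rV[R]_n :=
  \row_i ((e_of (f i) + v_of (f i) * x ord0 i) / 3).

Definition SD_cube (n : nat) : Rg -> ('rV[R]_n -> X) -> chain n :=
  match n as m return Rg -> ('rV[R]_m -> X) -> chain m with
  | 0 => fun c T => [:: (c * (-1), T)]
  | m.+1 => fun c T =>
      [seq (c * (- \prod_(i < m.+1) vR_of (f i)), fun x => T (h_map f x))
      | f : {ffun 'I_m.+1 -> 'I_3} <- enum {ffun 'I_m.+1 -> 'I_3}]
  end.

Definition SD (n : nat) (l : chain n) : chain n :=
  flatten [seq SD_cube p.1 p.2 | p <- l].

End Cubical.

(* Main.v *)
Require Import Defs.
From HB Require Import structures.
From mathcomp Require Import all_boot all_order all_algebra.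
From mathcomp Require Import all_classical all_reals all_analysis.
From mathcomp Require Import ring lra.
Set Implicit Arguments. Unset Strict Implicit. Unset Printing Implicit Defensive.
Import Order.TTheory GRing.Theory Num.Theory.
Import numFieldNormedType.Exports.
Local Open Scope classical_set_scope.
Local Open Scope ring_scope.

Lemma mx_continuous (R : realType) (Y : topologicalType) m n
  (f : Y -> 'M[R]_(m, n)) :
  (forall i j, continuous (fun y => f y i j)) -> continuous f.
Proof.
move=> H y A [P PN sPA]; apply: (filterS sPA).
apply: filter_forall => i; apply: filter_forall => j.
exact: (H i j y (P i j) (PN i j)).
Qed.

Lemma within_comp (Y Z W : topologicalType) (A : set Y) (B : set Z)
  (phi : Y -> Z) (T : Z -> W) :
  continuous phi -> (forall y, A y -> B (phi y)) ->
  {within B, continuous T} -> {within A, continuous (T \o phi)}.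
Proof.
move=> cphi AB /(@subspace_continuousP _ B _ T) hT.
apply/(@subspace_continuousP _ A _ (T \o phi)) => x Ax.
apply: (@cvg_comp _ _ _ phi T _ (within B (nbhs (phi x)))); last exact: hT _ (AB _ Ax).
move=> S /= hS; rewrite /within /=.
have h : nbhs x (fun y => B (phi y) -> S (phi y)) := cphi x _ hS.
change (nbhs x (fun y => A y -> S (phi y))).
apply: (filterS _ h) => y /= Sy Ay; exact: Sy (AB _ Ay).
Qed.

Section Alg.
Variable Rg : comPzRingType.

Definition ev {Y : Type} (c : seq (Rg * Y)) (w : Y -> Rg) : Rg :=
  \sum_(p <- c) p.1 * w p.2.

Definition act {A B C : Type} (c : seq (Rg * (B -> C))) (d : seq (Rg * (A -> B)))
  : seq (Rg * (A -> C)) :=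
  flatten [seq [seq (p.1 * q.1, p.2 \o q.2) | q <- d] | p <- c].

Definition sc {Y : Type} (r : Rg) (c : seq (Rg * Y)) : seq (Rg * Y) :=
  [seq (r * p.1, p.2) | p <- c].

Lemma ev_nil Y (w : Y -> Rg) : ev [::] w = 0.
Proof. by rewrite /ev big_nil. Qed.

Lemma ev_cons Y (p : Rg * Y) c w : ev (p :: c) w = p.1 * w p.2 + ev c w.
Proof. by rewrite /ev big_cons. Qed.

Lemma ev_cat Y (c d : seq (Rg * Y)) w : ev (c ++ d) w = ev c w + ev d w.
Proof. by rewrite /ev big_cat. Qed.

Lemma ev_sc Y r (c : seq (Rg * Y)) w : ev (sc r c) w = r * ev c w.
Proof.
rewrite /ev /sc big_map mulr_sumr; apply: eq_bigr => p _ /=; by rewrite mulrA.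
Qed.

Lemma ev_flatten Y (T : Type) (s : seq T) (F : T -> seq (Rg * Y)) w :
  ev (flatten [seq F x | x <- s]) w = \sum_(x <- s) ev (F x) w.
Proof.
elim: s => [|x s IH] /=; first by rewrite ev_nil big_nil.
by rewrite ev_cat IH big_cons.
Qed.

Lemma ev_act A B C (c : seq (Rg * (B -> C))) (d : seq (Rg * (A -> B))) w :
  ev (act c d) w = ev c (fun f => ev d (fun g => w (f \o g))).
Proof.
rewrite /act ev_flatten /ev; apply: eq_bigr => p _.
rewrite big_map mulr_sumr; apply: eq_bigr => q _ /=; by rewrite mulrA.
Qed.

Lemma ev_lin Y (c : seq (Rg * Y)) (x y : Rg) F G :
  ev c (fun f => x * F f + y * G f) = x * ev c F + y * ev c G.
Proof.
rewrite /ev !mulr_sumr -big_split /=; apply: eq_bigr => p _.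
by rewrite mulrDr !mulrA [p.1 * x]mulrC [p.1 * y]mulrC.
Qed.

Lemma ev_add Y (c : seq (Rg * Y)) F G :
  ev c (fun f => F f + G f) = ev c F + ev c G.
Proof. by rewrite /ev -big_split /=; apply: eq_bigr => p _; rewrite mulrDr. Qed.

Lemma ev_scal Y (c : seq (Rg * Y)) (x : Rg) F :
  ev c (fun f => x * F f) = x * ev c F.
Proof.
rewrite /ev mulr_sumr; apply: eq_bigr => p _; by rewrite !mulrA [p.1 * x]mulrC.
Qed.

Lemma ev_opp Y (c : seq (Rg * Y)) F :
  ev c (fun f => - F f) = - ev c F.
Proof. by rewrite /ev -sumrN; apply: eq_bigr => p _; rewrite mulrN. Qed.

Lemma ev_sub Y (c : seq (Rg * Y)) F G :
  ev c (fun f => F f - G f) = ev c F - ev c G.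
Proof. by rewrite ev_add ev_opp. Qed.

Lemma ev_sum Y (c : seq (Rg * Y)) (I : Type) (s : seq I) (P : pred I) F :
  ev c (fun f => \sum_(i <- s | P i) F i f) = \sum_(i <- s | P i) ev c (F i).
Proof.
rewrite /ev exchange_big /=; apply: eq_bigr => p _; by rewrite mulr_sumr.
Qed.

Lemma ev_ext Y (c : seq (Rg * Y)) F G : (forall f, F f = G f) -> ev c F = ev c G.
Proof. by move=> h; rewrite /ev; apply: eq_bigr => p _; rewrite h. Qed.

Lemma ev0 Y (c : seq (Rg * Y)) : ev c (fun _ => 0) = 0.
Proof. by rewrite /ev big1 // => p _; rewrite mulr0. Qed.

End Alg.

Section Cube.
Variable R : realType.

Definition rest n (x : 'rV[R]_n.+1) : 'rV[R]_n := \row_i x ord0 (lift ord0 i).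

Lemma insE n (j : 'I_n.+1) (t : R) (x : 'rV[R]_n) k :
  ins j t x ord0 k = match unlift j k with None => t | Some k' => x ord0 k' end.
Proof. by rewrite mxE. Qed.

Lemma ins_at n (j : 'I_n.+1) (t : R) (x : 'rV[R]_n) : ins j t x ord0 j = t.
Proof. by rewrite insE unlift_none. Qed.

Lemma ins_lift n (j : 'I_n.+1) (t : R) (x : 'rV[R]_n) k :
  ins j t x ord0 (lift j k) = x ord0 k.
Proof. by rewrite insE liftK. Qed.

Lemma unlift_lift0 n (i k : 'I_n.+1) :
  unlift (lift ord0 i) (lift ord0 k) = omap (lift ord0) (unlift i k).
Proof.
case: (unliftP i k) => [k''|] ->; last by rewrite unlift_none.
have -> : lift ord0 (lift i k'') = lift (lift ord0 i) (lift ord0 k'').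
  apply: val_inj => /=; rewrite /bump /= !add1n !ltnS; by case: (i <= k'')%N.
exact: (liftK (lift ord0 i) (lift ord0 k'')).
Qed.

Lemma unlift_lift0_0 n (i : 'I_n.+1) :
  unlift (lift ord0 i) ord0 = Some ord0.
Proof.
case: (unliftP (lift ord0 i) ord0) => [k|] E.
  congr Some; apply: val_inj; move/(congr1 val): E.
  by case: k => [[|k] Hk] //=; rewrite /bump addnS.
by move/(congr1 val): E.
Qed.

Lemma ins_comm n (i : 'I_n.+1) (e t : R) (y : 'rV[R]_n) :
  ins (lift ord0 i) e (ins ord0 t y) = ins ord0 t (ins i e y).
Proof.
apply/rowP => k; rewrite !mxE.
case: (unliftP ord0 k) => [k'|] ->.
- rewrite unlift_lift0 !mxE.
  by case: (unlift i k') => [k''|] //=; rewrite ins_lift.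
- by rewrite unlift_lift0_0 mxE unlift_none.
Qed.

Lemma rest_ins0 n t (y : 'rV[R]_n) : rest (ins ord0 t y) = y.
Proof. by apply/rowP => k; rewrite mxE ins_lift. Qed.

Lemma ins0_rest n (x : 'rV[R]_n.+1) : ins ord0 (x ord0 ord0) (rest x) = x.
Proof.
apply/rowP => k; rewrite insE.
by case: (unliftP ord0 k) => [k'|] ->; rewrite ?liftK ?unlift_none ?mxE.
Qed.

Lemma insS_00 n (i : 'I_n.+1) e (x : 'rV[R]_n.+1) :
  ins (lift ord0 i) e x ord0 ord0 = x ord0 ord0.
Proof. by rewrite -{1}(ins0_rest x) ins_comm ins_at. Qed.

Lemma rest_insS n (i : 'I_n.+1) e (x : 'rV[R]_n.+1) :
  rest (ins (lift ord0 i) e x) = ins i e (rest x).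
Proof. by rewrite -{1}(ins0_rest x) ins_comm rest_ins0. Qed.

Definition idx m n (f : 'rV[R]_m -> 'rV[R]_n) : 'rV[R]_m.+1 -> 'rV[R]_n.+1 :=
  fun x => ins ord0 (x ord0 ord0) (f (rest x)).
Definition Mf n (g : R -> R) : 'rV[R]_n.+1 -> 'rV[R]_n.+1 :=
  fun x => ins ord0 (g (x ord0 ord0)) (rest x).
Definition Phi n (g : R -> R -> R) : 'rV[R]_n.+2 -> 'rV[R]_n.+1 :=
  fun x => ins ord0 (g (x ord0 ord0) (rest x ord0 ord0)) (rest (rest x)).

Lemma idx_id m : idx (@id 'rV[R]_m) = id.
Proof. by apply: funext => x; rewrite /idx ins0_rest. Qed.

Lemma idx_comp k m n (f : 'rV[R]_m -> 'rV[R]_n) (g : 'rV[R]_k -> 'rV[R]_m) :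
  idx (f \o g) = idx f \o idx g.
Proof. by apply: funext => x; rewrite /idx /= ins_at rest_ins0. Qed.

Lemma idx_ins m (i : 'I_m.+1) e : idx (ins i e) = ins (lift ord0 i) e.
Proof. by apply: funext => x; rewrite /idx -ins_comm ins0_rest. Qed.

Lemma idx_ins0 m n (f : 'rV[R]_m -> 'rV[R]_n) t :
  idx f \o ins ord0 t = ins ord0 t \o f.
Proof. by apply: funext => x; rewrite /idx /= ins_at rest_ins0. Qed.

Lemma idx_insS m n (f : 'rV[R]_m.+1 -> 'rV[R]_n) (i : 'I_m.+1) e :
  idx f \o ins (lift ord0 i) e = idx (f \o ins i e).
Proof. by apply: funext => x; rewrite /idx /= insS_00 rest_insS. Qed.

Lemma Mf_ins0 n g t : Mf g \o ins ord0 t = ins ord0 (g t) :> ('rV[R]_n -> _).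
Proof. by apply: funext => x; rewrite /Mf /= ins_at rest_ins0. Qed.

Lemma Mf_insS n g (i : 'I_n.+1) e :
  Mf g \o ins (lift ord0 i) e = ins (lift ord0 i) e \o Mf g.
Proof. by apply: funext => x; rewrite /Mf /= insS_00 rest_insS ins_comm. Qed.

Lemma Mf_id n : Mf (fun t => t) = @id 'rV[R]_n.+1.
Proof. by apply: funext => x; rewrite /Mf ins0_rest. Qed.

Lemma Phi_ins0 n g e : Phi (n:=n) g \o ins ord0 e = Mf (g e).
Proof. by apply: funext => x; rewrite /Phi /Mf /= ins_at !rest_ins0. Qed.

Lemma Phi_ins1 n g e : Phi (n:=n) g \o ins (lift ord0 ord0) e = Mf (fun t => g t e).
Proof.
apply: funext => x; rewrite /Phi /Mf /= insS_00 rest_insS ins_at rest_ins0 //.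
Qed.

Lemma Phi_insSS n g (i : 'I_n.+1) e :
  Phi (n:=n.+1) g \o ins (lift ord0 (lift ord0 i)) e = ins (lift ord0 i) e \o Phi (n:=n) g.
Proof.
apply: funext => x; rewrite /Phi /= insS_00 !rest_insS insS_00 ins_comm //.
Qed.

Lemma rest_ins0f n t : @rest n \o ins ord0 t = @id 'rV[R]_n.
Proof. by apply: funext => x; rewrite /= rest_ins0. Qed.

Lemma rest_insSf n (i : 'I_n.+1) e :
  @rest n.+1 \o ins (lift ord0 i) e = ins i e \o @rest n.
Proof. by apply: funext => x; rewrite /= rest_insS. Qed.

End Cube.

Section Std.
Variables (Rg : comPzRingType) (R : realType) (a b : Rg).

Definition Bd n : seq (Rg * ('rV[R]_n -> 'rV[R]_n.+1)) :=
  flatten [seq [:: ((-1) ^+ val j * a, ins j 0); ((-1) ^+ val j * b, ins j 1)]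
          | j <- enum 'I_n.+1].

Definition p0 (t : R) : R := t / 3.
Definition p1 (t : R) : R := (2 + t) / 3.
Definition p2 (t : R) : R := (2 - t) / 3.

Definition Sig n : seq (Rg * ('rV[R]_n.+1 -> 'rV[R]_n.+1)) :=
  [:: (1, Mf p0); (1, Mf p1); (-1, Mf p2)].

Definition Fib m n (c : seq (Rg * ('rV[R]_m -> 'rV[R]_n))) :
  seq (Rg * ('rV[R]_m.+1 -> 'rV[R]_n.+1)) := [seq (p.1, idx p.2) | p <- c].

Definition gam1 (x y : R) : R := y + x * (1 - y) / 3.
Definition gam2 (x y : R) : R := (2 - y + x * (1 + y)) / 3.

Definition Hc n : seq (Rg * ('rV[R]_n.+2 -> 'rV[R]_n.+1)) :=
  [:: (1, Phi gam1); (1, Phi gam2)].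

Fixpoint Dc n : seq (Rg * ('rV[R]_n.+1 -> 'rV[R]_n)) :=
  match n with
  | 0 => [::]
  | m.+1 => Hc m ++ sc (-1) (act (Fib (Dc m)) (Sig m.+1))
  end.

Fixpoint Qc n : seq (Rg * ('rV[R]_n -> 'rV[R]_n)) :=
  match n with
  | 0 => [:: (1, id)]
  | m.+1 => act (Fib (Qc m)) (Sig m)
  end.

Definition Cyl n : seq (Rg * ('rV[R]_n.+1 -> 'rV[R]_n)) := [:: (1, @rest R n)].

Definition tB n (G : ('rV[R]_n.+1 -> 'rV[R]_n.+2) -> Rg) : Rg :=
  \sum_(i < n.+1) ((-1) ^+ i * a * G (ins (lift ord0 i) 0)
                   + (-1) ^+ i * b * G (ins (lift ord0 i) 1)).

Lemma ev_Bd n G : ev (Bd n) G =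
  \sum_(j < n.+1) ((-1) ^+ j * a * G (ins j 0) + (-1) ^+ j * b * G (ins j 1)).
Proof.
rewrite /Bd ev_flatten big_enum /=; apply: eq_bigr => j _.
by rewrite !ev_cons ev_nil addr0.
Qed.

Lemma ev_Bd_split n G : ev (Bd n.+1) G =
  a * G (ins ord0 0) + b * G (ins ord0 1) - tB G.
Proof.
rewrite ev_Bd big_ord_recl /= expr0 !mul1r /tB -sumrN; congr (_ + _).
apply: eq_bigr => i _; rewrite /bump /= add1n exprS !mulN1r !mulNr opprD.
by [].
Qed.

Lemma ev_Sig n G : ev (Sig n) G = G (Mf p0) + G (Mf p1) - G (Mf p2).
Proof. by rewrite /Sig !ev_cons ev_nil addr0 !mul1r mulN1r addrA. Qed.

Lemma ev_Fib m n (c : seq (Rg * ('rV[R]_m -> 'rV[R]_n))) G :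
  ev (Fib c) G = ev c (fun f => G (idx f)).
Proof. by rewrite /ev /Fib big_map. Qed.

Lemma ev_Hc n G : ev (Hc n) G = G (Phi gam1) + G (Phi gam2).
Proof. by rewrite /Hc !ev_cons ev_nil addr0 !mul1r. Qed.


Lemma sgn_lift n (i : 'I_n) : (-1) ^+ (lift ord0 i : nat) = - (-1) ^+ i :> Rg.
Proof. by rewrite /= /bump /= add1n exprS mulN1r. Qed.

Lemma sgnS (i : nat) : (-1) ^+ bump 0 i = - (-1) ^+ i :> Rg.
Proof. by rewrite /bump /= add1n exprS mulN1r. Qed.

Lemma gam1_0 : gam1 0 = (fun t => t).
Proof. by apply: funext => t; rewrite /gam1 mul0r mul0r addr0. Qed.
Lemma gam2_0 : gam2 0 = p2.
Proof. by apply: funext => t; rewrite /gam2 /p2 mul0r addr0. Qed.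
Lemma gam1_1 : gam1 1 = (fun t => (1 + 2 * t) / 3).
Proof. apply: funext => t; rewrite /gam1; by field. Qed.
Lemma gam2_y1 : (fun t => gam2 t 1) = (fun t => (1 + 2 * t) / 3).
Proof. apply: funext => t; rewrite /gam2; by field. Qed.
Lemma gam1_y1 : (fun t => gam1 t 1) = (fun _ => 1).
Proof. apply: funext => t; rewrite /gam1 subrr mulr0 mul0r addr0 //. Qed.
Lemma gam2_1 : gam2 1 = (fun _ => 1).
Proof. apply: funext => t; rewrite /gam2; by field. Qed.
Lemma gam1_y0 : (fun t => gam1 t 0) = p0.
Proof. apply: funext => t; rewrite /gam1 /p0 subr0 mulr1 add0r //. Qed.
Lemma gam2_y0 : (fun t => gam2 t 0) = p1.
Proof. apply: funext => t; rewrite /gam2 /p1 subr0 addr0 mulr1 //. Qed.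

Lemma Hc_bd n (w : ('rV[R]_n.+1 -> 'rV[R]_n.+1) -> Rg) :
  ev (Hc n) (fun f => ev (Bd n.+1) (fun g => w (f \o g))) =
  a * w id - a * ev (Sig n) w +
  \sum_(i < n) ((-1) ^+ i * a * ev (Hc n) (fun f => w (f \o ins (lift ord0 (lift ord0 i)) 0))
              + (-1) ^+ i * b * ev (Hc n) (fun f => w (f \o ins (lift ord0 (lift ord0 i)) 1))).
Proof.
under eq_bigr do rewrite !ev_Hc.
rewrite ev_Hc !ev_Bd_split /tB !big_ord_recl /= !expr0 !mul1r.
rewrite !Phi_ins0 !Phi_ins1 gam1_0 gam2_0 gam1_1 gam2_y1 gam1_y1 gam2_1 gam1_y0 gam2_y0.
rewrite Mf_id ev_Sig.
set S1 := \sum_(i < n) ((-1) ^+ bump 0 i * a * w (Phi gam1 \o _) + _).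
set S2 := \sum_(i < n) ((-1) ^+ bump 0 i * a * w (Phi gam2 \o _) + _).
have -> : \sum_(i < n) ((-1) ^+ i * a *
      (w (Phi gam1 \o ins (lift ord0 (lift ord0 i)) 0) +
       w (Phi gam2 \o ins (lift ord0 (lift ord0 i)) 0)) +
      (-1) ^+ i * b *
      (w (Phi gam1 \o ins (lift ord0 (lift ord0 i)) 1) +
       w (Phi gam2 \o ins (lift ord0 (lift ord0 i)) 1))) = - S1 - S2.
  rewrite /S1 /S2 -!sumrN -big_split /=; apply: eq_bigr => i _.
  rewrite sgnS; ring.
ring.
Qed.


Lemma Hc_insSS n (i : 'I_n.+1) e (w : ('rV[R]_n.+2 -> 'rV[R]_n.+2) -> Rg) :
  ev (Hc n.+1) (fun f => w (f \o ins (lift ord0 (lift ord0 i)) e)) =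
  ev (Hc n) (fun f => w (ins (lift ord0 i) e \o f)).
Proof. by rewrite !ev_Hc !Phi_insSS. Qed.

Lemma p0_0 : p0 0 = 0. Proof. by rewrite /p0 mul0r. Qed.
Lemma p2_0 : p2 0 = p1 0. Proof. by rewrite /p2 /p1 subr0 addr0. Qed.
Lemma p2_1 : p2 1 = p0 1. Proof. rewrite /p2 /p0; lra. Qed.
Lemma p1_1 : p1 1 = 1. Proof. rewrite /p1; lra. Qed.

Lemma idxMf_insS k p (f : 'rV[R]_k.+1 -> 'rV[R]_p) g (i : 'I_k.+1) e :
  (idx f \o Mf g) \o ins (lift ord0 i) e = idx (f \o ins i e) \o Mf g.
Proof. by rewrite -compA Mf_insS compA idx_insS. Qed.

Lemma idxMf_ins0 k p (f : 'rV[R]_k -> 'rV[R]_p) g e :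
  (idx f \o Mf g) \o ins ord0 e = ins ord0 (g e) \o f.
Proof. by rewrite -compA Mf_ins0 idx_ins0. Qed.

Lemma Sig_bd k p (f : 'rV[R]_k.+1 -> 'rV[R]_p)
  (w : ('rV[R]_k.+1 -> 'rV[R]_p.+1) -> Rg) :
  ev (Sig k.+1) (fun s => ev (Bd k.+1) (fun g => w (idx f \o s \o g))) =
  a * w (ins ord0 0 \o f) + b * w (ins ord0 1 \o f)
  - ev (Bd k) (fun g => ev (Sig k) (fun s => w (idx (f \o g) \o s))).
Proof.
rewrite ev_Bd; under eq_bigr do rewrite !ev_Sig.
rewrite ev_Sig !ev_Bd_split /tB !idxMf_ins0 p0_0 p2_0 p2_1 p1_1.
set S0 := \sum_(i < k.+1) (_ * w ((idx f \o Mf p0) \o _) + _).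
set S1 := \sum_(i < k.+1) (_ * w ((idx f \o Mf p1) \o _) + _).
set S2 := \sum_(i < k.+1) (_ * w ((idx f \o Mf p2) \o _) + _).
have -> : \sum_(i < k.+1)
     ((-1) ^+ i * a *
      (w (idx (f \o ins i 0) \o Mf p0) + w (idx (f \o ins i 0) \o Mf p1) -
       w (idx (f \o ins i 0) \o Mf p2)) +
      (-1) ^+ i * b *
      (w (idx (f \o ins i 1) \o Mf p0) + w (idx (f \o ins i 1) \o Mf p1) -
       w (idx (f \o ins i 1) \o Mf p2))) = S0 + S1 - S2.
  rewrite /S0 /S1 /S2 -big_split -sumrB /=; apply: eq_bigr => i _.
  rewrite !idxMf_insS; ring.
ring.
Qed.

Lemma Sig_bd0 p (f : 'rV[R]_0 -> 'rV[R]_p)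
  (w : ('rV[R]_0 -> 'rV[R]_p.+1) -> Rg) :
  ev (Sig 0) (fun s => ev (Bd 0) (fun g => w (idx f \o s \o g))) =
  a * w (ins ord0 0 \o f) + b * w (ins ord0 1 \o f).
Proof.
rewrite ev_Sig !ev_Bd !big_ord1 /= expr0 !mul1r !idxMf_ins0 p0_0 p2_0 p2_1 p1_1.
ring.
Qed.

End Std.

Section Main.
Variables (Rg : comPzRingType) (R : realType) (a b : Rg).

Notation Bd := (@Bd Rg R a b).
Notation Qc := (@Qc Rg R).
Notation Dc := (@Dc Rg R).
Notation Sig := (@Sig Rg R).

Lemma ev_Qc_S m G : ev (Qc m.+1) G = ev (Qc m) (fun f => ev (Sig m) (fun s => G (idx f \o s))).
Proof.
have -> : Qc m.+1 = act (Fib (Qc m)) (Sig m) by [].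
by rewrite ev_act ev_Fib.
Qed.

Lemma ev_lin3 Y (c : seq (Rg * Y)) F G H :
  ev c (fun f => a * F f + b * G f - H f) = a * ev c F + b * ev c G - ev c H.
Proof. by rewrite ev_sub ev_lin. Qed.

Lemma shift_comp k m (i : 'I_k.+1) e (h : 'rV[R]_m -> 'rV[R]_k) (s : 'rV[R]_m.+1 -> 'rV[R]_m.+1) :
  (idx (ins i e \o h) \o s) = ins (lift ord0 i) e \o (idx h \o s).
Proof. by rewrite idx_comp idx_ins. Qed.

Lemma CM n w : ev (act (Qc n.+1) (Bd n)) w = ev (act (Bd n) (Qc n)) w.
Proof.
elim: n w => [|m IH] w.
  rewrite [LHS]ev_act [RHS]ev_act ev_Qc_S.
  under ev_ext => f do rewrite Sig_bd0.
  rewrite ev_lin ev_Bd big_ord1 /= expr0 !mul1r //.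
rewrite [LHS]ev_act [RHS]ev_act ev_Qc_S.
under ev_ext => f do rewrite Sig_bd.
rewrite ev_lin3.
have IH' := IH (fun chi => ev (Sig m) (fun s => w (idx chi \o s))).
rewrite [LHS]ev_act [RHS]ev_act in IH'.
rewrite IH' ev_Bd_split /tB ev_Bd; congr (_ - _).
apply: eq_bigr => i _; rewrite !ev_Qc_S.
congr (_ * _ + _ * _); apply: ev_ext => h; apply: ev_ext => s; by rewrite shift_comp.
Qed.

Notation Hc := (@Hc Rg R).

Lemma ev_Dc_S m G : ev (Dc m.+1) G =
  ev (Hc m) G - ev (Dc m) (fun f => ev (Sig m.+1) (fun s => G (idx f \o s))).
Proof.
have -> : Dc m.+1 = Hc m ++ sc (-1) (act (Fib (Dc m)) (Sig m.+1)) by [].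
by rewrite ev_cat ev_sc ev_act ev_Fib mulN1r.
Qed.

Lemma ev_nil_in Y Z (c : seq (Rg * Y)) (G : Y -> Z -> Rg) :
  ev c (fun f => ev [::] (G f)) = 0.
Proof. by rewrite /ev big1 // => p _; rewrite big_nil mulr0. Qed.

Lemma comp_id_l A B (f : A -> B) : id \o f = f.
Proof. by []. Qed.

Lemma HOM m w : ev (act (Dc m.+1) (Bd m.+1)) w =
  a * w id - a * ev (Qc m.+1) w - ev (act (Bd m) (Dc m)) w.
Proof.
elim: m w => [|m IH] w.
  rewrite [LHS]ev_act ev_Dc_S Hc_bd big_ord0 addr0 ev_Qc_S ev_act /= !ev_nil.
  rewrite ev_cons ev_nil addr0 mul1r idx_id.
  by rewrite ev_nil_in subr0.
rewrite [LHS]ev_act ev_Dc_S Hc_bd.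
cbv beta.
under [X in _ - X = _]ev_ext => f do rewrite Sig_bd.
rewrite ev_lin3.
have IH' := IH (fun chi => ev (Sig m.+1) (fun s => w (idx chi \o s))).
rewrite [LHS]ev_act in IH'; rewrite IH'; cbv beta.
under eq_bigr do rewrite !Hc_insSS.
rewrite [ev (Qc m.+2) w]ev_Qc_S idx_id.
rewrite (@ev_ext _ _ (Sig m.+1) (fun s => w (id \o s)) w) //.
rewrite [ev (act (Bd m) _) _]ev_act [ev (act (Bd m.+1) _) _]ev_act ev_Bd ev_Bd_split /tB.
under [X in _ = _ - (_ - X)]eq_bigr do rewrite !ev_Dc_S.
set SH := \sum_(i < m.+1) (_ * ev (Hc m) _ + _).
set ST := \sum_(j < m.+1) (_ * ev (Dc m) _ + _).
set SR := \sum_(i < m.+1) _.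
have -> : SR = SH - ST.
  rewrite /SH /ST /SR -sumrB; apply: eq_bigr => i _.
  have E : forall e, ev (Dc m) (fun f => ev (Sig m.+1) (fun s => w (ins (lift ord0 i) e \o (idx f \o s)))) =
     ev (Dc m) (fun g => ev (Sig m.+1) (fun s => w (idx (ins i e \o g) \o s))).
    by move=> e; apply: ev_ext => h; apply: ev_ext => s; rewrite shift_comp.
  rewrite !E; ring.
ring.
Qed.

Notation Cyl := (@Cyl Rg R).

Lemma CYL0 w : ev (act (Cyl 0) (Bd 0)) w = (a + b) * w id.
Proof.
rewrite ev_act /Cyl ev_cons ev_nil addr0 mul1r ev_Bd big_ord1 /= expr0 !mul1r.
by rewrite !rest_ins0f mulrDl.
Qed.

Lemma CYLS m w : ev (act (Cyl m.+1) (Bd m.+1)) w =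
  (a + b) * w id - ev (act (Bd m) (Cyl m)) w.
Proof.
rewrite !ev_act /Cyl !ev_cons !ev_nil !addr0 !mul1r ev_Bd_split /tB !rest_ins0f mulrDl.
congr (_ - _); rewrite ev_Bd; apply: eq_bigr => i _.
by rewrite /= !ev_cons !ev_nil !addr0 !mul1r !rest_insSf.
Qed.

End Main.

Section Bridge.
Variables (Rg : comPzRingType) (R : realType) (X : topologicalType) (a b : Rg).

Notation Qc := (@Qc Rg R).
Notation Sig := (@Sig Rg R).

Definition pk (k : 'I_3) (t : R) : R := (e_of R k + v_of R k * t) / 3.

Definition ext n (k : 'I_3) (f : {ffun 'I_n -> 'I_3}) : {ffun 'I_n.+1 -> 'I_3} :=
  [ffun i : 'I_n.+1 => if unlift ord0 i is Some j then f j else k].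

Lemma h_map_ext n k (f : {ffun 'I_n -> 'I_3}) :
  idx (h_map f) \o Mf (pk k) = h_map (ext k f).
Proof.
apply: funext => x; apply/rowP => i; rewrite /= /idx /Mf !mxE ffunE.
case: (unliftP ord0 i) => [j|] ->; rewrite ?liftK ?unlift_none.
  by rewrite rest_ins0 !mxE.
by [].
Qed.

Lemma sum_ext n (G : {ffun 'I_n.+1 -> 'I_3} -> Rg) :
  \sum_(F : {ffun 'I_n.+1 -> 'I_3}) G F = \sum_(k : 'I_3) \sum_(f : {ffun 'I_n -> 'I_3}) G (ext k f).
Proof.
rewrite pair_big /=.
rewrite (reindex (fun p : 'I_3 * {ffun 'I_n -> 'I_3} => ext p.1 p.2)) //=.
exists (fun F : {ffun 'I_n.+1 -> 'I_3} => (F ord0, [ffun j => F (lift ord0 j)])).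
  move=> [k f] _ /=; rewrite /ext ffunE unlift_none; congr pair.
  by apply/ffunP => j; rewrite !ffunE liftK.
move=> F _; apply/ffunP => i; rewrite /ext ffunE /=.
by case: (unliftP ord0 i) => [j|] ->; rewrite ?liftK ?unlift_none ?ffunE.
Qed.

Lemma pk0 : pk ord0 = @p0 R. Proof. by apply: funext => t; rewrite /pk /p0 /= add0r mul1r. Qed.
Lemma pk1 : pk (lift ord0 ord0) = @p1 R. Proof. by apply: funext => t; rewrite /pk /p1 /= mul1r. Qed.
Lemma pk2 : pk (lift ord0 (lift ord0 ord0)) = @p2 R.
Proof. by apply: funext => t; rewrite /pk /p2 /= mulN1r. Qed.

Lemma ext0 n k (f : {ffun 'I_n -> 'I_3}) : ext k f ord0 = k.
Proof. by rewrite /ext ffunE unlift_none. Qed.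

Lemma prod_ext n k (f : {ffun 'I_n -> 'I_3}) :
  \prod_(i < n) vR_of Rg (ext k f (lift ord0 i)) = \prod_(i < n) vR_of Rg (f i).
Proof. by apply: eq_bigr => i _; rewrite /ext ffunE liftK. Qed.

Lemma QcE n (g : ('rV[R]_n -> 'rV[R]_n) -> Rg) :
  ev (Qc n) g = \sum_(f : {ffun 'I_n -> 'I_3}) (\prod_(i < n) vR_of Rg (f i)) * g (h_map f).
Proof.
elim: n g => [|n IH] g.
  rewrite /= ev_cons ev_nil addr0 mul1r.
  rewrite (eq_bigl (pred1 [ffun i : 'I_0 => ord0])); last first.
    by move=> f /=; apply/esym/eqP/ffunP => -[].
  rewrite big_pred1_eq big_ord0 mul1r; congr g.
  by apply: funext => x; apply/rowP => -[].
have -> : Qc n.+1 = act (Fib (Qc n)) (Sig n) by [].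
rewrite ev_act ev_Fib IH sum_ext exchange_big /=; apply: eq_bigr => f _.
rewrite ev_Sig !big_ord_recl big_ord0 addr0 /=.
rewrite -!h_map_ext pk0 pk1 pk2 !prod_ext !ext0 /vR_of /=; ring.
Qed.

Lemma evE Y (c : seq (Rg * Y)) F : ev c F = \sum_(p <- c) p.1 * F p.2.
Proof. by []. Qed.

Lemma SD_cube_ev n c (T : 'rV[R]_n -> X) w :
  ev (SD_cube c T) w = - (c * ev (Qc n) (fun f => w (T \o f))).
Proof.
case: n T w => [|n] T w.
  by rewrite /= !ev_cons !ev_nil !addr0 mul1r /= mulrN1 mulNr.
rewrite QcE /ev /= big_map big_enum /= mulr_sumr -sumrN.
apply: eq_bigr => f _ /=; rewrite mulrN mulNr mulrA //.
Qed.

Lemma SD_ev n (l : chain Rg R X n) w :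
  ev (SD l) w = - ev (act l (Qc n)) w.
Proof.
rewrite /SD ev_flatten ev_act [in RHS]evE -sumrN; apply: eq_bigr => p _.
by rewrite SD_cube_ev.
Qed.

Lemma bd_ev n (l : chain Rg R X n.+1) w :
  ev (bd a b l) w = ev (act l (Bd R a b n)) w.
Proof.
rewrite /bd ev_flatten ev_act [RHS]evE; apply: eq_bigr => p _.
rewrite ev_flatten ev_Bd big_enum /= mulr_sumr; apply: eq_bigr => j _.
rewrite !ev_cons ev_nil addr0 /=; ring.
Qed.

Definition ind n (S : 'rV[R]_n -> X) (T : 'rV[R]_n -> X) : Rg :=
  if `[< same_cube T S >] then 1 else 0.

Lemma coef_ev n (l : chain Rg R X n) S : coef l S = ev l (ind S).
Proof.
rewrite /coef /ev; apply: eq_bigr => p _; rewrite /ind.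
by case: ifP => _; rewrite ?mulr1 ?mulr0.
Qed.

End Bridge.

Section Resp.
Variables (Rg : comPzRingType) (R : realType) (X : topologicalType).

Lemma same_refl n (T : 'rV[R]_n -> X) : same_cube T T.
Proof. by []. Qed.
Lemma same_sym n (T S : 'rV[R]_n -> X) : same_cube T S -> same_cube S T.
Proof. by move=> h x hx; rewrite h. Qed.
Lemma same_trans n (T S U : 'rV[R]_n -> X) : same_cube T S -> same_cube S U -> same_cube T U.
Proof. by move=> h1 h2 x hx; rewrite h1 // h2. Qed.

Lemma ev_respect0 n (l : chain Rg R X n) (g : ('rV[R]_n -> X) -> Rg) :
  (forall S, coef l S = 0) -> (forall T T', same_cube T T' -> g T = g T') -> ev l g = 0.
Proof.
move=> hl hg; have [m] := ubnP (size l); elim: m l hl => // m IH l hl hm.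
case: l hl hm => [|p l'] hl hm; first by rewrite ev_nil.
pose P := fun q : Rg * ('rV[R]_n -> X) => `[< same_cube q.2 p.2 >].
rewrite evE (bigID P) /=.
have e1 : \sum_(q <- p :: l' | P q) q.1 * g q.2 = coef (p :: l') p.2 * g p.2.
  rewrite /coef big_distrl /= big_mkcond; apply: eq_bigr => q _; rewrite /P.
  by case: asboolP => h; [rewrite (hg _ _ h) | rewrite mul0r].
rewrite e1 hl mul0r add0r -big_filter -evE.
apply: IH.
- move=> S; rewrite /coef big_filter.
  case: (asboolP (same_cube p.2 S)) => hS.
    rewrite big1 // => q; rewrite /P /=; case: asboolP => // h _.
    case: asboolP => // h'; exfalso; apply: h; apply: same_trans h' (same_sym hS).
  move: (hl S); rewrite /coef (bigID P) /= big1 ?add0r //.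
  move=> q; rewrite /P; case: asboolP => // h _; case: asboolP => // h'.
  by exfalso; apply: hS; apply: same_trans (same_sym h) h'.
- rewrite /= /P; case: asboolP => [_|h]; last by exfalso; apply: h.
  by rewrite /= size_filter; exact: leq_ltn_trans (count_size _ l') hm.
Qed.

End Resp.

Section Good.
Variable R : realType.

Lemma cD (Y : topologicalType) (u v : Y -> R) :
  continuous u -> continuous v -> continuous (fun y => u y + v y).
Proof. move=> cu cv y; have := @continuousD R R^o Y u v y (cu y) (cv y). exact. Qed.
Lemma cM (Y : topologicalType) (u v : Y -> R) :
  continuous u -> continuous v -> continuous (fun y => u y * v y).
Proof. move=> cu cv y; have := @continuousM R Y u v y (cu y) (cv y). exact. Qed.
Lemma cN (Y : topologicalType) (u : Y -> R) :
  continuous u -> continuous (fun y => - u y).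
Proof. move=> cu y; have := @continuousN R R^o Y u y (cu y). exact. Qed.
Lemma cC (Y : topologicalType) (c : R) : continuous (fun _ : Y => c).
Proof. by move=> y; apply: cst_continuous. Qed.
Lemma cB (Y : topologicalType) (u v : Y -> R) :
  continuous u -> continuous v -> continuous (fun y => u y - v y).
Proof. by move=> cu cv; apply: cD => //; apply: cN. Qed.

Lemma cont_comp (Y Z W : topologicalType) (f : Y -> Z) (g : Z -> W) :
  continuous f -> continuous g -> continuous (g \o f).
Proof. by move=> cf cg x; apply: continuous_comp; [exact: cf | exact: cg]. Qed.

Lemma cont_coord m (j : 'I_m) : continuous (fun x : 'rV[R]_m => x ord0 j).
Proof. exact: coord_continuous. Qed.

Lemma cont_ins (Y : topologicalType) n (j : 'I_n.+1) (t : Y -> R) (y : Y -> 'rV[R]_n) :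
  continuous t -> continuous y -> continuous (fun z => ins j (t z) (y z)).
Proof.
move=> ct cy; apply: mx_continuous => i k; rewrite (ord1 i).
have -> : (fun z => ins j (t z) (y z) ord0 k) =
  (fun z => match unlift j k with None => t z | Some k' => y z ord0 k' end).
  by apply: funext => z; rewrite insE.
case: (unlift j k) => [k'|] //.
move=> z; apply: (@continuous_comp _ _ _ y (fun x : 'rV[R]_n => x ord0 k')); first exact: cy.
exact: cont_coord.
Qed.

Lemma cont_rest n : continuous (@rest R n).
Proof.
apply: mx_continuous => i k; rewrite (ord1 i).
have -> : (fun x : 'rV[R]_n.+1 => rest x ord0 k) = (fun x => x ord0 (lift ord0 k)).
  by apply: funext => x; rewrite mxE.
exact: cont_coord.
Qed.

Definition cubemap m n (f : 'rV[R]_m -> 'rV[R]_n) := forall x, Icube x -> Icube (f x).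
Definition good m n (f : 'rV[R]_m -> 'rV[R]_n) := continuous f /\ cubemap f.

Lemma Icube_ins n (j : 'I_n.+1) t (y : 'rV[R]_n) :
  0 <= t <= 1 -> Icube y -> Icube (ins j t y).
Proof. by move=> ht hy k; rewrite insE; case: (unlift j k). Qed.

Lemma Icube_rest n (x : 'rV[R]_n.+1) : Icube x -> Icube (rest x).
Proof. by move=> hx k; rewrite mxE. Qed.

Lemma good_comp k m n (f : 'rV[R]_m -> 'rV[R]_n) (g : 'rV[R]_k -> 'rV[R]_m) :
  good f -> good g -> good (f \o g).
Proof.
move=> [cf hf] [cg hg]; split; first exact: cont_comp.
by move=> x hx; apply: hf; apply: hg.
Qed.

Lemma good_id n : good (@id 'rV[R]_n).
Proof. by split => // x; exact: cvg_id. Qed.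

Lemma good_ins n (j : 'I_n.+1) t : 0 <= t <= 1 -> good (ins j t).
Proof.
move=> ht; split; last by move=> x hx; apply: Icube_ins.
change (continuous (fun z => ins j ((fun _ : 'rV[R]_n => t) z) (id z))).
by apply: cont_ins; [apply: cC | move=> x; exact: cvg_id].
Qed.

Lemma good_rest n : good (@rest R n).
Proof. by split; [exact: cont_rest | move=> x; exact: Icube_rest]. Qed.

Lemma good_idx m n (f : 'rV[R]_m -> 'rV[R]_n) : good f -> good (idx f).
Proof.
move=> [cf hf]; split.
  apply: cont_ins; first exact: cont_coord.
  move=> z; apply: (@continuous_comp _ _ _ (@rest R m) f); [exact: cont_rest | exact: cf].
move=> x hx; apply: Icube_ins; first exact: hx.
by apply: hf; apply: Icube_rest.
Qed.

Lemma good_Mf n (g : R -> R) : continuous g -> (forall t, 0 <= t <= 1 -> 0 <= g t <= 1) ->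
  good (@Mf R n g).
Proof.
move=> cg hg; split.
  apply: cont_ins; last exact: cont_rest.
  move=> z; apply: (@continuous_comp _ _ _ (fun x : 'rV[R]_n.+1 => x ord0 ord0) g); [exact: cont_coord | exact: cg].
move=> x hx; apply: Icube_ins; first exact: hg (hx ord0).
exact: Icube_rest.
Qed.

Lemma good_Phi n (g : R -> R -> R) :
  (forall (Y : topologicalType) (u v : Y -> R), continuous u -> continuous v ->
     continuous (fun y => g (u y) (v y))) ->
  (forall s t, 0 <= s <= 1 -> 0 <= t <= 1 -> 0 <= g s t <= 1) ->
  good (@Phi R n g).
Proof.
move=> cg hg; split.
  apply: cont_ins.
    apply: cg; first exact: cont_coord.
    move=> z; apply: (@continuous_comp _ _ _ (@rest R n.+1) (fun x : 'rV[R]_n.+1 => x ord0 ord0)); [exact: cont_rest | exact: cont_coord].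
  move=> z; apply: (@continuous_comp _ _ _ (@rest R n.+1) (@rest R n)); exact: cont_rest.
move=> x hx; apply: Icube_ins.
  by apply: hg; [exact: hx | rewrite mxE; exact: hx].
by do 2 apply: Icube_rest.
Qed.

End Good.

Lemma In_cat T (p : T) s1 s2 : List.In p (s1 ++ s2) -> List.In p s1 \/ List.In p s2.
Proof.
elim: s1 => [|x s1 IH]; first by right.
rewrite /=.
by case=> [->|/IH [h|h]]; [left; left | left; right | right].
Qed.

Lemma In_map T U (f : T -> U) p s : List.In p [seq f x | x <- s] -> exists x, List.In x s /\ p = f x.
Proof.
elim: s => [|x s IH]; first by [].
rewrite /= => h; case: h => [e|h].
  by exists x; split; [left|rewrite e].
by have [y [hy ->]] := IH h; exists y; split; [right|].
Qed.

Lemma In_flatten T (p : T) ss : List.In p (flatten ss) -> exists s, List.In s ss /\ List.In p s.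
Proof.
elim: ss => [|s ss IH]; first by [].
rewrite /= => H; case: (In_cat H) => h; first by exists s; split; [left|].
by have [t [ht hp]] := IH h; exists t; split; [right|].
Qed.

Section AllGood.
Variables (Rg : comPzRingType) (R : realType) (a b : Rg).

Definition allg m n (c : seq (Rg * ('rV[R]_m -> 'rV[R]_n))) :=
  forall p, List.In p c -> good p.2.

Lemma allg_cat m n (c d : seq (Rg * ('rV[R]_m -> 'rV[R]_n))) :
  allg c -> allg d -> allg (c ++ d).
Proof. by move=> hc hd p H; case: (In_cat H) => [/hc|/hd]. Qed.

Lemma allg_sc m n r (c : seq (Rg * ('rV[R]_m -> 'rV[R]_n))) : allg c -> allg (sc r c).
Proof. by move=> hc p H; have [q [hq ->]] := In_map H; exact: hc _ hq. Qed.

Lemma allg_act k m n (c : seq (Rg * ('rV[R]_m -> 'rV[R]_n))) (d : seq (Rg * ('rV[R]_k -> 'rV[R]_m))) :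
  allg c -> allg d -> allg (act c d).
Proof.
move=> hc hd p H; have [s [H1 H2]] := In_flatten H.
have [q [hq E]] := In_map H1; subst s.
have [r [hr ->]] := In_map H2.
exact: good_comp (hc _ hq) (hd _ hr).
Qed.

Lemma allg_Fib m n (c : seq (Rg * ('rV[R]_m -> 'rV[R]_n))) : allg c -> allg (Fib c).
Proof. by move=> hc p H; have [q [hq ->]] := In_map H; apply: good_idx; apply: hc. Qed.

Lemma cont_scale (Y : topologicalType) (u : Y -> R) (c d : R) :
  continuous u -> continuous (fun y => (c + d * u y) / 3).
Proof. by move=> cu; apply: cM; [apply: cD; [apply: cC | apply: cM => //; apply: cC] | apply: cC]. Qed.

Lemma allg_Sig n : allg (Sig Rg R n).
Proof.
move=> p /= [<-|[<-|[<-|[]]]] /=; apply: good_Mf.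
- have -> : (@p0 R) = (fun t => (0 + 1 * t) / 3) by apply: funext => t; rewrite /p0 add0r mul1r.
  by apply: cont_scale => x; exact: cvg_id.
- by move=> t; rewrite /p0; lra.
- have -> : (@p1 R) = (fun t => (2 + 1 * t) / 3) by apply: funext => t; rewrite /p1 mul1r.
  by apply: cont_scale => x; exact: cvg_id.
- by move=> t; rewrite /p1; lra.
- have -> : (@p2 R) = (fun t => (2 + (-1) * t) / 3) by apply: funext => t; rewrite /p2 mulN1r.
  by apply: cont_scale => x; exact: cvg_id.
- by move=> t; rewrite /p2; lra.
Qed.

Lemma cont_gam1 (Y : topologicalType) (u v : Y -> R) :
  continuous u -> continuous v -> continuous (fun y => gam1 (u y) (v y)).
Proof.
move=> cu cv; rewrite /gam1; apply: cD => //; apply: cM; last exact: cC.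
by apply: cM => //; apply: cB => //; apply: cC.
Qed.

Lemma cont_gam2 (Y : topologicalType) (u v : Y -> R) :
  continuous u -> continuous v -> continuous (fun y => gam2 (u y) (v y)).
Proof.
move=> cu cv; rewrite /gam2; apply: cM; last exact: cC.
apply: cD; first by apply: cB => //; apply: cC.
by apply: cM => //; apply: cD => //; apply: cC.
Qed.

Lemma allg_Hc n : allg (Hc Rg R n).
Proof.
move=> p /= [<-|[<-|[]]] /=; apply: good_Phi.
- exact: cont_gam1.
- move=> s t /andP [s0 s1] /andP [t0 t1]; rewrite /gam1; apply/andP; split; nra.
- exact: cont_gam2.
- move=> s t /andP [s0 s1] /andP [t0 t1]; rewrite /gam2; apply/andP; split; nra.
Qed.

Lemma allg_Dc n : allg (Dc Rg R n).
Proof.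
elim: n => [|n IH]; first by [].
apply: allg_cat; first exact: allg_Hc.
apply: allg_sc; apply: allg_act; [exact: allg_Fib | exact: allg_Sig].
Qed.

Lemma allg_Qc n : allg (Qc Rg R n).
Proof.
elim: n => [|n IH]; first by move=> p /= [<-|[]]; exact: good_id.
apply: allg_act; [exact: allg_Fib | exact: allg_Sig].
Qed.

Lemma allg_Cyl n : allg (Cyl Rg R n).
Proof. by move=> p /= [<-|[]]; exact: good_rest. Qed.

Lemma allg_Bd n : allg (Bd R a b n).
Proof.
move=> p H; have [s [H1 H2]] := In_flatten H.
have [j [_ E]] := In_map H1; subst s.
case: H2 => [<-|[<-|[]]] /=; apply: good_ins; apply/andP; split; lra.
Qed.

End AllGood.

Section Valid.
Variables (Rg : comPzRingType) (R : realType) (X : topologicalType).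

Lemma valid_act n m (u : chain Rg R X n) (c : seq (Rg * ('rV[R]_m -> 'rV[R]_n))) :
  valid u -> allg c -> valid (act u c).
Proof.
move=> hu hc p H; have [s [H1 H2]] := In_flatten H.
have [q [hq E]] := In_map H1; subst s.
have [r [hr ->]] := In_map H2; case: (hc _ hr) => cr cubr /=.
exact: within_comp cr cubr (hu _ hq).
Qed.

Lemma good_h_map n (f : {ffun 'I_n -> 'I_3}) : good (@h_map R n f).
Proof.
split.
  apply: mx_continuous => i j; rewrite (ord1 i).
  have -> : (fun x : 'rV[R]_n => h_map f x ord0 j) =
     (fun x => (e_of R (f j) + v_of R (f j) * x ord0 j) / 3).
    by apply: funext => x; rewrite mxE.
  by apply: cont_scale; exact: cont_coord.
move=> x hx j; rewrite mxE; move: (hx j) => /andP [h0 h1].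
rewrite /e_of /v_of; case: (f j) => [[|[|[|k]]] Hk] //=; apply/andP; split; lra.
Qed.

Lemma valid_SD_cube n (c : Rg) (T : 'rV[R]_n -> X) :
  {within @Icube R n, continuous T} -> valid (SD_cube c T).
Proof.
case: n T => [|n] T hT p /=.
  by case=> [<-|[]].
move=> H; have [f [_ ->]] := In_map H => /=.
have [cf hf] := good_h_map f.
exact: within_comp cf hf hT.
Qed.

Lemma valid_SD n (u : chain Rg R X n) : valid u -> valid (SD u).
Proof.
move=> hu p H; have [s [H1 H2]] := In_flatten H.
have [q [hq E]] := In_map H1; subst s.
exact: valid_SD_cube (hu _ hq) _ H2.
Qed.

Lemma valid_cat n (u v : chain Rg R X n) : valid u -> valid v -> valid (u ++ v).
Proof. by move=> hu hv p H; case: (In_cat H) => [/hu|/hv]. Qed.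

Lemma valid_scale n r (u : chain Rg R X n) : valid u -> valid (scale r u).
Proof. by move=> hu p H; have [q [hq ->]] := In_map H; exact: hu _ hq. Qed.

End Valid.

Section Final.
Variables (Rg : comPzRingType) (R : realType) (X : topologicalType) (a b : Rg).

Notation chain := (chain Rg R X).
Notation ind := (@ind Rg R X _).

Lemma coef_cat n (x y : chain n) S : coef (x ++ y) S = coef x S + coef y S.
Proof. by rewrite /coef big_cat. Qed.

Lemma coef_scale n r (x : chain n) S : coef (scale r x) S = r * coef x S.
Proof.
rewrite /coef /scale big_map mulr_sumr; apply: eq_bigr => p _ /=.
by case: ifP; rewrite ?mulr0.
Qed.

Lemma coef_nil n (S : 'rV[R]_n -> X) : coef ([::] : chain n) S = 0.
Proof. by rewrite /coef big_nil. Qed.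

Lemma bd_cat n (x y : chain n.+1) : bd a b (x ++ y) = bd a b x ++ bd a b y.
Proof. by rewrite /bd map_cat flatten_cat. Qed.

Lemma coef_bd_scale n r (w : chain n.+1) S : coef (bd a b (scale r w)) S = r * coef (bd a b w) S.
Proof.
rewrite !coef_ev !bd_ev !ev_act.
by change (scale r w) with (sc r w); rewrite ev_sc.
Qed.

Lemma hom_comb n (x y x1 y1 x2 y2 : chain n) :
  homologous a b x1 y1 -> homologous a b x2 y2 ->
  (forall S, coef x S - coef y S = (coef x1 S - coef y1 S) + (coef x2 S - coef y2 S)) ->
  homologous a b x y.
Proof.
move=> [w1 [v1 h1]] [w2 [v2 h2]] h; exists (w1 ++ w2); split; first exact: valid_cat.
by move=> S; rewrite bd_cat coef_cat h1 h2 h.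
Qed.

Lemma hom_scale n r (x y : chain n) :
  homologous a b x y -> homologous a b (scale r x) (scale r y).
Proof.
move=> [w [v h]]; exists (scale r w); split; first exact: valid_scale.
by move=> S; rewrite coef_bd_scale h !coef_scale mulrBr.
Qed.

Lemma hom_zero n (x y : chain n) :
  (forall S, coef x S = coef y S) -> homologous a b x y.
Proof.
move=> h; exists [::]; split; first by [].
by move=> S; rewrite h subrr /bd /= coef_nil.
Qed.

Lemma ev_ext_in Y (c : seq (Rg * Y)) F G :
  (forall p, List.In p c -> F p.2 = G p.2) -> ev c F = ev c G.
Proof.
elim: c => [|p c IH] h; first by rewrite !ev_nil.
rewrite !ev_cons h ?IH //; [by move=> q hq; apply: h; right | by left].
Qed.

Lemma ev_act_zero n m (l : chain n) (c : seq (Rg * ('rV[R]_m -> 'rV[R]_n))) S :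
  (forall S', coef l S' = 0) -> allg c -> ev (act l c) (ind S) = 0.
Proof.
move=> hl hc; rewrite ev_act; apply: ev_respect0 => // T T' hT.
apply: ev_ext_in => p /hc [_ cub]; rewrite /ind.
congr (if _ then _ else _); apply: asbool_equiv_eq; split => h x hx /=.
  by rewrite -(h x hx) /= hT //; apply: cub.
by rewrite -(h x hx) /= -hT //; apply: cub.
Qed.

End Final.

Section Final2.
Variables (Rg : comPzRingType) (R : realType) (X : topologicalType) (a b : Rg).

Notation chain := (chain Rg R X).
Notation ind := (@ind Rg R X _).

Lemma act_assoc (A B C D : Type) (c : seq (Rg * (C -> D))) (d : seq (Rg * (B -> C)))
  (e : seq (Rg * (A -> B))) w :
  ev (act (act c d) e) w = ev (act c (act d e)) w.
Proof.
rewrite ev_act [RHS]ev_act ev_act; apply: ev_ext => h.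
by rewrite ev_act.
Qed.

Lemma cyc_act n (u : chain n.+1) :
  (forall S, coef (bd a b u) S = 0) -> forall S, coef (act u (Bd R a b n)) S = 0.
Proof. by move=> h S; rewrite coef_ev -bd_ev -coef_ev. Qed.

Lemma A2S n (u : chain n.+1) : valid u -> (forall S, coef (bd a b u) S = 0) ->
  homologous a b (scale a (SD u)) (scale (-a) u).
Proof.
move=> hv hc; exists (act u (Dc Rg R n.+1)); split.
  exact: valid_act hv (@allg_Dc Rg R n.+1).
move=> S; rewrite !coef_scale coef_ev bd_ev act_assoc ev_act.
under ev_ext => T do rewrite HOM.
rewrite ev_sub ev_sub ev_scal ev_scal.
rewrite -[ev u (fun T => ev (Qc Rg R n.+1) _)]ev_act.
rewrite -[ev u (fun T => ev (act (Bd R a b n) (Dc Rg R n)) _)]ev_act.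
rewrite -act_assoc.
have hD : allg (Dc Rg R n) by move=> p hp; exact: allg_Dc hp.
rewrite (ev_act_zero S (cyc_act hc) hD) subr0.
rewrite (@ev_ext _ _ u (fun f => ind S (f \o id)) (ind S)) // -coef_ev.
rewrite [coef (SD u) S]coef_ev SD_ev; ring.
Qed.

Lemma A2Z (u : chain 0) : homologous a b (scale a (SD u)) (scale (-a) u).
Proof.
apply: hom_zero => S; rewrite !coef_scale [coef (SD u) S]coef_ev SD_ev ev_act coef_ev.
have -> : ev u (fun f => ev (Qc Rg R 0) (fun g => ind S (f \o g))) = ev u (ind S).
  by apply: ev_ext => T; rewrite /= ev_cons ev_nil addr0 mul1r.
ring.
Qed.

Lemma A1S n (u : chain n.+1) : (forall S, coef (bd a b u) S = 0) ->
  forall S, coef (bd a b (SD u)) S = 0.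
Proof.
move=> hc S; rewrite coef_ev bd_ev ev_act SD_ev.
have -> : ev (act u (Qc Rg R n.+1)) (fun f => ev (Bd R a b n) (fun g => ind S (f \o g))) =
          ev (act (act u (Qc Rg R n.+1)) (Bd R a b n)) (ind S) by rewrite [RHS]ev_act.
rewrite act_assoc ev_act.
under ev_ext => T do rewrite CM.
rewrite -ev_act -act_assoc.
have hQ : allg (Qc Rg R n) by move=> p hp; exact: allg_Qc hp.
by rewrite (ev_act_zero S (cyc_act hc) hQ) oppr0.
Qed.

Lemma A3S n (u : chain n.+1) : valid u -> (forall S, coef (bd a b u) S = 0) ->
  homologous a b (scale (a + b) u) [::].
Proof.
move=> hv hc; have hC1 : allg (Cyl Rg R n.+1) by move=> p hp; exact: allg_Cyl hp.
exists (act u (Cyl Rg R n.+1)); split; first exact: valid_act hv hC1.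
move=> S; rewrite coef_scale coef_nil subr0 coef_ev bd_ev act_assoc ev_act.
under ev_ext => T do rewrite CYLS.
rewrite ev_sub ev_scal -ev_act -act_assoc.
have hC : allg (Cyl Rg R n) by move=> p hp; exact: allg_Cyl hp.
rewrite (ev_act_zero S (cyc_act hc) hC) subr0 coef_ev.
by congr (_ * _); apply: ev_ext.
Qed.

Lemma A3Z (u : chain 0) : valid u -> homologous a b (scale (a + b) u) [::].
Proof.
move=> hv; have hC1 : allg (Cyl Rg R 0) by move=> p hp; exact: allg_Cyl hp.
exists (act u (Cyl Rg R 0)); split; first exact: valid_act hv hC1.
move=> S; rewrite coef_scale coef_nil subr0 coef_ev bd_ev act_assoc ev_act.
under ev_ext => T do rewrite CYL0.
rewrite ev_scal coef_ev.
by congr (_ * _); apply: ev_ext.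
Qed.

End Final2.

Section Final3.
Variables (Rg : comPzRingType) (R : realType) (X : topologicalType) (a b : Rg).

Notation chain := (chain Rg R X).

Lemma A1 n (u : chain n) : valid u -> is_cycle a b u -> valid (SD u) /\ is_cycle a b (SD u).
Proof.
case: n u => [|n] u hv hc; split; try exact: valid_SD; first by [].
exact: A1S.
Qed.

Lemma A2 n (u : chain n) : valid u -> is_cycle a b u ->
  homologous a b (scale a (SD u)) (scale (-a) u).
Proof. case: n u => [|n] u hv hc; [exact: A2Z | exact: A2S]. Qed.

Lemma A3 n (u : chain n) : valid u -> is_cycle a b u ->
  homologous a b (scale (a + b) u) [::].
Proof. case: n u => [|n] u hv hc; [exact: A3Z | exact: A3S]. Qed.

Lemma IT n (u : chain n) : valid u -> is_cycle a b u ->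
  forall k, valid (iter k (@SD Rg R X n) u) /\ is_cycle a b (iter k (@SD Rg R X n) u).
Proof. move=> hv hc; elim=> [|k [h1 h2]] //=; exact: A1. Qed.

Lemma L1 n (u : chain n) : valid u -> is_cycle a b u ->
  forall k, homologous a b (scale (a ^+ k) (iter k (@SD Rg R X n) u)) (scale ((- a) ^+ k) u).
Proof.
move=> hv hc; elim=> [|k IH].
  by apply: hom_zero => S /=; rewrite !coef_scale.
have [h1 h2] := IT hv hc k.
have H1 := hom_scale (a ^+ k) (A2 h1 h2).
have H2 := hom_scale (- a) IH.
apply: (hom_comb H1 H2) => S /=; rewrite !coef_scale !exprS; ring.
Qed.

End Final3.

Theorem lemma4 (Rg : comPzRingType) (R : realType) (X : topologicalType)
  (a b : Rg) (k n : nat) (u : chain Rg R X n) :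
  valid u -> is_cycle a b u ->
  homologous a b (scale (a ^+ k) (iter k (@SD Rg R X n) u)) (scale (b ^+ k) u) /\
  homologous a b (scale (b ^+ k) (iter k (@SD Rg R X n) u)) (scale (a ^+ k) u).
Proof.
move=> hv hc; have [h1 h2] := IT hv hc k.
have HL := L1 hv hc k.
split.
  pose c := - \sum_(i < k) (- a) ^+ (k.-1 - i) * b ^+ i.
  have H2 := hom_scale c (A3 hv hc).
  apply: (hom_comb HL H2) => S; rewrite !coef_scale coef_nil /c.
  have E := subrXX (- a) b k.
  have -> : b ^+ k = (- a) ^+ k - (- a - b) * \sum_(i < k) (- a) ^+ (k.-1 - i) * b ^+ i.
    by rewrite -E; ring.
  ring.
pose c := \sum_(i < k) b ^+ (k.-1 - i) * (- a) ^+ i.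
have H1 := hom_scale ((- 1) ^+ k) HL.
have H2 := hom_scale c (A3 h1 h2).
apply: (hom_comb H1 H2) => S; rewrite !coef_scale coef_nil /c.
have E := subrXX b (- a) k.
have -> : b ^+ k = (- a) ^+ k + (b - - a) * \sum_(i < k) b ^+ (k.-1 - i) * (- a) ^+ i.
  by rewrite -E; ring.
have E3 : (- 1) ^+ k * a ^+ k = (- a) ^+ k by rewrite -exprMn mulN1r.
have E4 : (- 1) ^+ k * (- a) ^+ k = a ^+ k by rewrite -exprMn mulN1r opprK.
rewrite !mulrA E3 E4; ring.
Qed.
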